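(* Let $\Pi$ be an $\mathrm{LP}^{\mathrm{MLN}}$ program such that $\mathrm{SM}'[\Pi]$ is not empty, and let $I$ be an interpretation. The following are equivalent: (1) $I$ is a (probabilistic) stable model of $\Pi$; (2) $I\in\mathrm{SM}'[\Pi]$; (3) $P'_\Pi(I)>0$.
   Context: Signature with finitely many ground atoms; interpretations are sets of ground atoms. A formula is negative if every atom occurrence is in the scope of negation. A rule has the form $A\leftarrow B\wedge N$ ($A$ a possibly empty disjunction of atoms, $B$ a conjunction of atoms, $N$ a negative formula), identified with $B\wedge N\rightarrow A$. The reduct $\Pi^I$ of a ground program consists of $A\leftarrow B$ for rules with $I\models N$; $I$ is a (deterministic) stable model if it is a minimal model of $\Pi^I$. An $\mathrm{LP}^{\mathrm{MLN}}$ program $\Pi$ is a finite set of weighted rules $w:R$, $w$ real (soft) or the symbol $\alpha$ (hard), identified with its ground instance. $\overline{\Pi}$ drops weights; $\Pi_I=\{w:R\in\Pi\mid I\models R\}$; $\Pi^{\rm hard}$, $\Pi^{\rm soft}$ are its hard and soft rules. $\mathrm{SM}[\Pi]=\{I\mid I$ stable model of $\overline{\Pi_I}\}$; with $\alpha$ a real parameter, $W_\Pi(I)=\exp(\sum_{w:R\in\Pi_I}w)$ if $I\in\mathrm{SM}[\Pi]$, else $0$; $P_\Pi(I)=\lim_{\alpha\to\infty}W_\Pi(I)/\sum_{J\in\mathrm{SM}[\Pi]}W_\Pi(J)$; $I$ is a (probabilistic) stable model of $\Pi$ if $P_\Pi(I)\ne0$. $\mathrm{SM}'[\Pi]$ is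 the set of $I$ that are stable models of $\overline{\Pi_I}$ and satisfy $\overline{\Pi^{\rm hard}}$; $W'_\Pi(I)=\exp(\sum_{w:R\in(\Pi^{\rm soft})_I}w)$ if $I\in\mathrm{SM}'[\Pi]$, else $0$; $P'_\Pi(I)=W'_\Pi(I)/\sum_{J\in\mathrm{SM}'[\Pi]}W'_\Pi(J)$. *)

(* Defs.v *)
From HB Require Import structures.
From mathcomp Require Import all_boot all_order all_algebra.
From mathcomp Require Import all_classical all_reals all_analysis.
Set Implicit Arguments. Unset Strict Implicit. Unset Printing Implicit Defensive.
Import Order.TTheory GRing.Theory Num.Theory.
Import numFieldNormedType.Exports.
Local Open Scope classical_set_scope.
Local Open Scope ring_scope.

Section LPMLN.
Variable Atom : finType.

Inductive formula :=
| FAtom of Atom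
| FTop
| FBot
| FNeg of formula
| FAnd of formula & formula
| FOr of formula & formula
| FImp of formula & formula.

Fixpoint fsat (I : {set Atom}) (f : formula) : bool :=
  match f with
  | FAtom a => a \in I
  | FTop => true
  | FBot => false
  | FNeg g => ~~ fsat I g
  | FAnd g h => fsat I g && fsat I h
  | FOr g h => fsat I g || fsat I h
  | FImp g h => fsat I g ==> fsat I h
  end.

Fixpoint negative (f : formula) : bool :=
  match f with
  | FAtom _ => false
  | FTop | FBot | FNeg _ => true
  | FAnd g h | FOr g h | FImp g h => negative g && negative h
  end.

(* rule  A <- B /\ N : head disjunction A, positive body conjunction B,
   negative formula N *)
Record rule := Rule { head : seq Atom; pbody : seq Atom; nbody : formula }.

Definition wf_rule (r : rule) : bool := negative (nbody r).

Definition rsat (I : {set Atom}) (r : rule) : bool :=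
  (all (fun a => a \in I) (pbody r) && fsat I (nbody r)) ==>
  has (fun a => a \in I) (head r).

Definition prule := (seq Atom * seq Atom)%type.
Definition prsat (I : {set Atom}) (r : prule) : bool :=
  all (fun a => a \in I) r.2 ==> has (fun a => a \in I) r.1.

Definition reduct (P : seq rule) (I : {set Atom}) : seq prule :=
  [seq (head r, pbody r) | r <- P & fsat I (nbody r)].

Definition pmodel (P : seq prule) (J : {set Atom}) : bool := all (prsat J) P.

Definition minimal_model (P : seq prule) (I : {set Atom}) : bool :=
  pmodel P I && [forall J : {set Atom}, (J \proper I) ==> ~~ pmodel P J].

Definition stable (P : seq rule) (I : {set Atom}) : bool :=
  minimal_model (reduct P I) I.

Variable R : realType.

(* weights: a real number (soft) or the symbol alpha (hard) *)
Inductive weight := Soft of R | Hard.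

Definition wrule := (weight * rule)%type.
Definition program := seq wrule.

Definition wf_program (Pi : program) : bool := all (fun wr => wf_rule wr.2) Pi.

Definition unweight (Pi : program) : seq rule := [seq wr.2 | wr <- Pi].
Definition sat_part (Pi : program) (I : {set Atom}) : program :=
  [seq wr <- Pi | rsat I wr.2].
Definition hard_part (Pi : program) : program :=
  [seq wr <- Pi | if wr.1 is Hard then true else false].
Definition soft_part (Pi : program) : program :=
  [seq wr <- Pi | if wr.1 is Soft _ then true else false].

Definition SM (Pi : program) (I : {set Atom}) : bool :=
  stable (unweight (sat_part Pi I)) I.

Definition wval (alpha : R) (w : weight) : R :=
  match w with Soft x => x | Hard => alpha end.

Definition W (Pi : program) (alpha : R) (I : {set Atom}) : R :=
  if SM Pi I then expR (\sum_(wr <- sat_part Pi I) wval alpha wr.1) else 0.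

Definition P (Pi : program) (I : {set Atom}) : R :=
  lim ((fun alpha : R => W Pi alpha I / \sum_(J : {set Atom}) W Pi alpha J)
         @ +oo%R).

Definition prob_stable (Pi : program) (I : {set Atom}) : Prop := P Pi I != 0.

Definition SM' (Pi : program) (I : {set Atom}) : bool :=
  stable (unweight (sat_part Pi I)) I &&
  all (rsat I) (unweight (hard_part Pi)).

Definition W' (Pi : program) (I : {set Atom}) : R :=
  if SM' Pi I then expR (\sum_(wr <- sat_part (soft_part Pi) I) wval 0 wr.1)
  else 0.

Definition P' (Pi : program) (I : {set Atom}) : R :=
  W' Pi I / \sum_(J : {set Atom}) W' Pi J.

End LPMLN.

(* Main.v *)
Require Import Defs.
From HB Require Import structures.
From mathcomp Require Import all_boot all_order all_algebra.
From mathcomp Require Import all_classical all_reals all_analysis.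
From mathcomp Require Import ring.
Import Order.TTheory GRing.Theory Num.Theory.
Import numFieldNormedType.Exports.
Local Open Scope classical_set_scope.
Local Open Scope ring_scope.

Section Aux.
Variables (Atom : finType) (R : realType).

Definition hw (w : weight R) : nat := if w is Hard then 1%N else 0%N.

Lemma sum_alpha (s : program Atom R) (alpha : R) :
  \sum_(wr <- s) wval alpha wr.1 =
  \sum_(wr <- s) wval 0 wr.1 + alpha * (\sum_(wr <- s) hw wr.1)%N%:R.
Proof.
elim: s => [|wr s IH]; first by rewrite !big_nil mulr0 addr0.
rewrite !big_cons IH natrD mulrDr; case: wr => [[x|] r] /=.
  by rewrite mulr0 add0r addrA.
by rewrite mulr1 add0r addrCA addrA.
Qed.

Lemma h_prop (s : program Atom R) (I : {set Atom}) :
  (\sum_(wr <- sat_part s I) hw wr.1 <= \sum_(wr <- s) hw wr.1)%N /\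
  ((\sum_(wr <- sat_part s I) hw wr.1 == \sum_(wr <- s) hw wr.1)
    = all (rsat I) (unweight (hard_part s))).
Proof.
elim: s => [|wr s [IH1 IH2]]; first by rewrite /= !big_nil.
rewrite /sat_part /hard_part /= -/(sat_part s I) -/(hard_part s).
case: wr => [[x|] r] /=; case: (rsat I r) => /=; rewrite ?big_cons /= ?add0n.
- by [].
- by [].
- by rewrite leq_add2l eqn_add2l IH1 IH2.
- split; first by rewrite add1n (leq_trans IH1).
  by apply/negbTE; rewrite neq_ltn add1n ltnS IH1.
Qed.

Lemma sum_pos (F : {set Atom} -> R) (J0 : {set Atom}) :
  (forall J, 0 <= F J) -> 0 < F J0 -> 0 < \sum_(J : {set Atom}) F J.
Proof.
move=> F0 FJ0; rewrite (bigD1 J0) //=.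
by apply: ltr_wpDr => //; apply: sumr_ge0.
Qed.

Lemma cvgX0 (f : R -> R) (a : R) (k : nat) :
  f @ +oo --> a -> (fun x => f x ^+ k) @ +oo --> a ^+ k.
Proof.
move=> fa; elim: k => [|k IH].
  under eq_cvg do rewrite expr0. by rewrite expr0; apply: cvg_cst.
under eq_cvg do rewrite exprS. rewrite exprS.
exact: cvgM.
Qed.

Lemma cvg_sumJ (g : {set Atom} -> R -> R) (L : {set Atom} -> R) :
  (forall J, g J @ +oo --> L J) ->
  (fun x => \sum_(J : {set Atom}) g J x) @ +oo --> \sum_(J : {set Atom}) L J.
Proof.
move=> gL; elim: (index_enum _) => [|J s IH].
  under eq_cvg do rewrite big_nil. by rewrite big_nil; apply: cvg_cst.
under eq_cvg do rewrite big_cons. rewrite big_cons.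
exact: cvgD.
Qed.

End Aux.
Arguments hw {R}.
Arguments sum_alpha {Atom R}.
Arguments h_prop {Atom R}.
Arguments sum_pos {Atom R}.
Arguments cvgX0 {R}.
Arguments cvg_sumJ {Atom R}.


Theorem proposition5 (Atom : finType) (R : realType) (Pi : program Atom R) :
  wf_program Pi ->
  (exists J : {set Atom}, SM' Pi J) ->
  forall I : {set Atom},
    (prob_stable Pi I <-> SM' Pi I) /\ (SM' Pi I <-> 0 < P' Pi I).
Proof.
move=> _ [J0 HJ0] I.
set Ht := (\sum_(wr <- Pi) hw wr.1)%N.
set h := fun J => (\sum_(wr <- sat_part Pi J) hw wr.1)%N.
set A := fun J => \sum_(wr <- sat_part Pi J) wval 0 wr.1.
have SM'E J : SM' Pi J = SM Pi J && (h J == Ht).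
  by rewrite /SM' /SM (h_prop Pi J).2.
have hle J : (h J <= Ht)%N by exact: (h_prop Pi J).1.
have W'ge0 J : 0 <= W' Pi J by rewrite /W'; case: ifP => // _; exact: expR_ge0.
have S'pos : 0 < \sum_(J : {set Atom}) W' Pi J.
  by apply: (sum_pos _ J0) => //; rewrite /W' HJ0 expR_gt0.
have part2 : SM' Pi I <-> 0 < P' Pi I.
  rewrite /P'; split => [H|].
    by apply: divr_gt0 => //; rewrite /W' H expR_gt0.
  by rewrite /W'; case: ifP => // _; rewrite mul0r ltxx.
split => //.
pose L := fun J => if SM' Pi J then expR (A J) else 0.
pose g := fun J (alpha : R) =>
  if SM Pi J then expR (A J + alpha * ((h J)%:R - Ht%:R)) else 0.
have WE alpha J : W Pi alpha J = expR (alpha * Ht%:R) * g J alpha.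
  rewrite /W /g; case: ifP => _; last by rewrite mulr0.
  by rewrite sum_alpha -expRD; congr expR; rewrite -/(A J) -/(h J); ring.
have gL J : g J @ +oo --> L J.
  rewrite /g /L SM'E; case: (SM Pi J) => /=; last exact: cvg_cst.
  case: eqP => [->|hne].
    under eq_cvg do rewrite subrr mulr0 addr0. exact: cvg_cst.
  have hlt : (h J < Ht)%N by rewrite ltn_neqAle hle andbT; apply/eqP.
  have -> : (h J)%:R - Ht%:R = - (Ht - h J)%N%:R :> R.
    by rewrite natrB ?(ltnW hlt) // opprB.
  have -> : 0 = expR (A J) * 0 ^+ (Ht - h J) :> R.
    by rewrite expr0n subn_eq0 leqNgt hlt mulr0.
  under eq_cvg do rewrite expRD mulrN -mulNr expRM_natr.
  apply: cvgM; first exact: cvg_cst.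
  apply: cvgX0; exact: cvgr_expR.
have Spos : 0 < \sum_(J : {set Atom}) L J.
  apply: (sum_pos _ J0); last by rewrite /L HJ0 expR_gt0.
  by move=> J; rewrite /L; case: ifP => // _; exact: expR_ge0.
have PE : P Pi I = L I / \sum_(J : {set Atom}) L J.
  rewrite /P.
  have -> : (fun alpha : R => W Pi alpha I / \sum_(J : {set Atom}) W Pi alpha J)
      = (fun alpha => g I alpha * (\sum_(J : {set Atom}) g J alpha)^-1).
    apply: funext => alpha; rewrite WE.
    under eq_bigr do rewrite WE.
    rewrite -mulr_sumr invfM mulrACA mulfV ?mul1r //.
    by rewrite gt_eqF // expR_gt0.
  apply: cvg_lim => //.
  apply: cvgM; first exact: gL.
  apply: cvgV; first by rewrite gt_eqF.
  exact: cvg_sumJ.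
rewrite /prob_stable PE mulf_eq0 invr_eq0 (gt_eqF Spos) orbF /L.
by case: ifP => _; rewrite ?eqxx ?gt_eqF ?expR_gt0.
Qed.
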